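(* Let $G$ be a directed graph with $n$ nodes and $V_C$ a zero forcing set of $G$ with $|V_C|=m$. Suppose $G\in\mathcal{G}^{\mathcal{C},T}$ for a set $\mathcal{C}=\{C_1,\ldots,C_m\}$ of node-disjoint chains covering $V(G)$ with set of sources $V_C$ and a time function $T$ for $\mathcal{C}$. Then $E(G)\setminus\bigcup_{i=1}^mE(C_i)$ is a critical subtractive edge-set of $G$, and $n^c_{\mathrm{sub}}(G)=|E(G)|-n+m$.
   Context: Graphs are directed, self-loops allowed; $V(G)=\{1,\ldots,n\}$; $G-E'$ has node set $V(G)$ and edge set $E(G)\setminus E'$. $\mathcal{Q}(G)=\{A\in\mathbb{R}^{n\times n}:\text{for } i\neq j,\ A_{ij}\neq0\iff(j,i)\in E(G)\}$. For $V_C=\{j_1,\ldots,j_m\}$, $B=[e_{j_1},\ldots,e_{j_m}]$; the LTI network on $G$ with control nodes $V_C$ is strongly structurally controllable (SSC) if $(A,B)$ is controllable for all $A\in\mathcal{Q}(G)$. Zero forcing: with nodes colored black/white, a black node with exactly one white out-neighbor turns it black; $S$ is a zero forcing set if starting from black set $S$ and repeating this rule makes all nodes black. A subtractive edge-set is a set $E^*\subseteq E(G)$ such that for every $E'\subseteq E^*$, the network on $G-E'$ with control nodes $V_C$ is SSC. The critical subtractive number $n^c_{\mathrm{sub}}(G)$ is the maximum $|E^*|$ over subtractive edge-sets, and a critical subtractive edge-set is one of that cardinality. A chain is a directed path graph with source (start node) and sink (end node); for a non-sink $v$, $v+1$ is its out-neighbor. For node-disjoint chains $\mathcal{C}=\{C_1,\ldots,C_m\}$,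 $V=\bigcup_iV(C_i)$, $\gamma=|V|-m+1$, a time function is $T:V\to\{1,\ldots,\gamma\}$ with (1) $T(v)=1$ for every source; (2) distinct non-source nodes get distinct values; (3) $T(v)<T(v+1)$ for non-sink $v$. $T_{\max}(v)=\gamma$ for a sink $v$, else $T_{\max}(v)=T(v+1)-1$. $\mathcal{G}^{\mathcal{C},T}$ is the set of graphs $G$ with $V(G)=V$, $\bigcup_iE(C_i)\subseteq E(G)$, and $(u,v)\notin E(G)$ whenever $(u,v)\notin\bigcup_iE(C_i)$ and $T_{\max}(u)<T(v)$. *)

(* Defs.v *)
From HB Require Import structures.
From mathcomp Require Import all_boot all_order all_algebra.
From mathcomp Require Import Rstruct.
Set Implicit Arguments. Unset Strict Implicit. Unset Printing Implicit Defensive.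
Import GRing.Theory Num.Theory.
Local Open Scope ring_scope.

(* Node set V(G) = {1,...,n} is represented by 'I_n; a directed graph (self-loops
   allowed) on it is given by its edge set E : {set 'I_n * 'I_n}; (u,v) is the edge u -> v. *)
Notation edgeset n := {set 'I_n * 'I_n}.

Definition inQ (n : nat) (E : edgeset n) (A : 'M[Rdefinitions.R]_n) : Prop :=
  forall i j : 'I_n, i != j -> (A i j != 0 <-> (j, i) \in E).

(* B = [e_{j_1}, ..., e_{j_m}] for V_C = {j_1,...,j_m} (ordered by enum). *)
Definition Bmat (n : nat) (VC : {set 'I_n}) : 'M[Rdefinitions.R]_(n, #|VC|) :=
  \matrix_(i, k) (i == enum_val k)%:R.

Definition controllable (n m : nat) (A : 'M[Rdefinitions.R]_n) (B : 'M[Rdefinitions.R]_(n, m)) : Prop :=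
  \rank (\mxrow_(k < n) (A ^+ k *m B)) = n.

Definition SSC (n : nat) (E : edgeset n) (VC : {set 'I_n}) : Prop :=
  forall A : 'M[Rdefinitions.R]_n, inQ E A -> controllable A (Bmat VC).

Definition subtractive (n : nat) (E : edgeset n) (VC : {set 'I_n}) (Es : edgeset n) : Prop :=
  Es \subset E /\ forall E' : edgeset n, E' \subset Es -> SSC (E :\: E') VC.

Definition is_ncsub (n : nat) (E : edgeset n) (VC : {set 'I_n}) (k : nat) : Prop :=
  (exists Es : edgeset n, subtractive E VC Es /\ #|Es| = k) /\
  (forall Es : edgeset n, subtractive E VC Es -> (#|Es| <= k)%N).

Definition critical_subtractive (n : nat) (E : edgeset n) (VC : {set 'I_n}) (Es : edgeset n) : Prop :=
  subtractive E VC Es /\ is_ncsub E VC #|Es|.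

(* Zero forcing: one round of the colour-change rule applied by all black nodes
   that have exactly one white out-neighbour. *)
Definition force_step (n : nat) (E : edgeset n) (S : {set 'I_n}) : {set 'I_n} :=
  S :|: [set w | [exists u, [&& u \in S, w \notin S, (u, w) \in E &
                     [forall w', ((u, w') \in E) && (w' \notin S) ==> (w' == w)]]]].

Definition zero_forcing_set (n : nat) (E : edgeset n) (S : {set 'I_n}) : Prop :=
  exists k, iter k (force_step E) S = setT.

(* Chains: a chain is a nonempty duplicate-free sequence of nodes [v_1; ...; v_l]
   with source v_1, sink v_l and edges (v_i, v_{i+1}). *)
Definition chain_edges (n : nat) (c : seq 'I_n) : seq ('I_n * 'I_n) := zip c (behead c).

Definition chainsE (n : nat) (cs : seq (seq 'I_n)) : edgeset n :=
  [set e | has (fun c => e \in chain_edges c) cs].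

Definition chain_sources (n : nat) (cs : seq (seq 'I_n)) : {set 'I_n} :=
  [set v | has (fun c => ohead c == Some v) cs].

Definition disjoint_chain_cover (n : nat) (cs : seq (seq 'I_n)) : Prop :=
  [/\ all (fun c => c != [::]) cs, uniq (flatten cs) & forall v : 'I_n, v \in flatten cs].

Definition gamma (n : nat) (cs : seq (seq 'I_n)) : nat := (n - size cs + 1)%N.

Definition time_function (n : nat) (cs : seq (seq 'I_n)) (T : 'I_n -> nat) : Prop :=
  [/\ forall v, (1 <= T v <= gamma cs)%N,
      forall v, v \in chain_sources cs -> T v = 1%N,
      forall u v, u \notin chain_sources cs -> v \notin chain_sources cs ->
                  u != v -> T u != T v
    & forall u v, (u, v) \in chainsE cs -> (T u < T v)%N].

Definition Tmax (n : nat) (cs : seq (seq 'I_n)) (T : 'I_n -> nat) (v : 'I_n) : nat :=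
  match [pick w | (v, w) \in chainsE cs] with
  | Some w => (T w).-1
  | None => gamma cs
  end.

(* G in \mathcal{G}^{C,T} (V(G) = V is built in: the chains cover 'I_n). *)
Definition in_graph_class (n : nat) (cs : seq (seq 'I_n)) (T : 'I_n -> nat) (E : edgeset n) : Prop :=
  chainsE cs \subset E /\
  forall u v, (u, v) \in E -> (u, v) \notin chainsE cs -> ~ (Tmax cs T u < T v)%N.

(* Main.v *)
Require Import Defs.
From HB Require Import structures.
From mathcomp Require Import all_boot all_order all_algebra.
From mathcomp Require Import Rstruct.
Set Implicit Arguments. Unset Strict Implicit. Unset Printing Implicit Defensive.

Section Z.
Variable T : eqType.

Lemma zip_mem (s : seq T) a x y : (x, y) \in zip (a :: s) s -> (x \in a :: s) /\ (y \in s).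
Proof.
elim: s a => [|b s IH] a //=.
rewrite in_cons => /orP[/eqP [-> ->]|/IH [H1 H2]].
  by split; rewrite in_cons eqxx.
by split; [rewrite H1 orbT | rewrite in_cons H2 orbT].
Qed.

Lemma zip_succ (s : seq T) a x y y' : uniq (a :: s) ->
  (x, y) \in zip (a :: s) s -> (x, y') \in zip (a :: s) s -> y = y'.
Proof.
elim: s a => [|b s IH] a //= /andP[Ha Hu].
rewrite !in_cons => /orP[/eqP E1|H1] /orP[/eqP E2|H2].
- by case: E1 => _ ->; case: E2 => _ ->.
- case: E1 => Ex _; subst x.
  by have [/= Hx _] := zip_mem H2; rewrite Hx in Ha.
- case: E2 => Ex _; subst x.
  by have [/= Hx _] := zip_mem H1; rewrite Hx in Ha.
- exact: IH Hu H1 H2.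
Qed.

Lemma zip_pred (s : seq T) a x x' y : uniq (a :: s) ->
  (x, y) \in zip (a :: s) s -> (x', y) \in zip (a :: s) s -> x = x'.
Proof.
elim: s a => [|b s IH] a //= /andP[Ha Hu].
move: (Hu) => /= /andP[Hb _].
rewrite !in_cons => /orP[/eqP E1|H1] /orP[/eqP E2|H2].
- by case: E1 => -> _; case: E2 => -> _.
- case: E1 => _ Ey; subst y.
  by have [_ Hy] := zip_mem H2; rewrite Hy in Hb.
- case: E2 => _ Ey; subst y.
  by have [_ Hy] := zip_mem H1; rewrite Hy in Hb.
- exact: IH Hu H1 H2.
Qed.

Lemma zip_exists (s : seq T) a w : w \in s -> exists u, (u, w) \in zip (a :: s) s.
Proof.
elim: s a => [|b s IH] a //=.
rewrite in_cons => /orP[/eqP ->|Hw]; first by exists a; rewrite in_cons eqxx.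
have [u Hu] := IH b Hw; exists u; by rewrite in_cons Hu orbT.
Qed.

Lemma flatten_same (cs : seq (seq T)) c1 c2 x : uniq (flatten cs) ->
  c1 \in cs -> c2 \in cs -> x \in c1 -> x \in c2 -> c1 = c2.
Proof.
elim: cs => [|d cs IH] //=; rewrite cat_uniq => /and3P[Hd Hdis Hu].
rewrite !in_cons => /orP[/eqP->|H1] /orP[/eqP->|H2] // Hx1 Hx2.
- exfalso; move/hasP: Hdis; apply; exists x => //.
  by apply/flattenP; exists c2.
- exfalso; move/hasP: Hdis; apply; exists x => //.
  by apply/flattenP; exists c1.
- exact: IH.
Qed.

Lemma flatten_uniq_in (cs : seq (seq T)) c : uniq (flatten cs) -> c \in cs -> uniq c.
Proof.
elim: cs => [|d cs IH] //=; rewrite cat_uniq => /and3P[Hd _ Hu].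
by rewrite in_cons => /orP[/eqP->|H] //; apply: IH.
Qed.
End Z.

Section Chains.
Variable n : nat.
Variable cs : seq (seq 'I_n).
Hypothesis D : disjoint_chain_cover cs.

Lemma chainsEP e : reflect (exists2 c, c \in cs & e \in chain_edges c) (e \in chainsE cs).
Proof. rewrite inE; exact: hasP. Qed.

Lemma edge_in u v : (u, v) \in chainsE cs ->
  exists a s, [/\ a :: s \in cs, (u, v) \in zip (a :: s) s, u \in a :: s & v \in a :: s].
Proof.
move/chainsEP => [[|a s] Hc He] //.
have [H1 H2] := zip_mem He.
by exists a, s; split => //; rewrite in_cons H2 orbT.
Qed.

Lemma cs_succ u v v' : (u, v) \in chainsE cs -> (u, v') \in chainsE cs -> v = v'.
Proof.
case: D => _ Hu _.
move=> /edge_in [a [s [Hc He Hu1 _]]] /edge_in [a' [s' [Hc' He' Hu2 _]]].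
have E := flatten_same Hu Hc Hc' Hu1 Hu2.
case: E => Ea Es; subst a' s'.
exact: zip_succ (flatten_uniq_in Hu Hc) He He'.
Qed.

Lemma cs_pred u u' v : (u, v) \in chainsE cs -> (u', v) \in chainsE cs -> u = u'.
Proof.
case: D => _ Hu _.
move=> /edge_in [a [s [Hc He _ Hv1]]] /edge_in [a' [s' [Hc' He' _ Hv2]]].
have E := flatten_same Hu Hc Hc' Hv1 Hv2.
case: E => Ea Es; subst a' s'.
exact: zip_pred (flatten_uniq_in Hu Hc) He He'.
Qed.

Lemma cs_not_source u v : (u, v) \in chainsE cs -> v \notin chain_sources cs.
Proof.
case: D => _ Hu _.
move=> /edge_in [a [s [Hc He _ Hv1]]]; rewrite inE; apply/negP => /hasP [[|b s0] Hc0 //=].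
move/eqP => [Eb]; subst b.
have E := flatten_same Hu Hc Hc0 Hv1 (mem_head _ _).
case: E => Ea Es; subst a s0.
have [_ Hv] := zip_mem He.
by move: (flatten_uniq_in Hu Hc) => /= /andP[]; rewrite Hv.
Qed.

Lemma cs_pred_exists v : v \notin chain_sources cs -> exists u, (u, v) \in chainsE cs.
Proof.
case: D => Hne _ Hcov Hns.
have /flattenP [[|a s] Hc Hv] := Hcov v; first by [].
move: Hv; rewrite in_cons => /orP [/eqP Ev|Hv].
  subst a; exfalso; move/negP: Hns; apply; rewrite inE; apply/hasP.
  by exists (v :: s) => //=.
have [u Hu] := zip_exists a Hv.
by exists u; apply/chainsEP; exists (a :: s).
Qed.

Lemma cs_Tmax (T : 'I_n -> nat) u v : (u, v) \in chainsE cs -> Tmax cs T u = (T v).-1.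
Proof.
move=> Huv; rewrite /Tmax; case: pickP => [w Hw|H].
  by rewrite (cs_succ Hw Huv).
by have := H v; rewrite Huv.
Qed.

End Chains.
From mathcomp Require Import zify.
Import GRing.Theory Num.Theory.
Local Open Scope ring_scope.

Lemma mulB n (VC : {set 'I_n}) (y : 'rV[Rdefinitions.R]_n) k :
  (y *m Bmat VC) 0 k = y 0 (enum_val k).
Proof.
rewrite mxE (bigD1 (enum_val k)) //= big1 => [|i Hi]; rewrite mxE.
  by rewrite eqxx mulr1 addr0.
by rewrite (negbTE Hi) mulr0.
Qed.

Lemma ssc_class n (F : edgeset n) VC cs T :
  disjoint_chain_cover cs -> chain_sources cs = VC -> time_function cs T ->
  in_graph_class cs T F -> SSC F VC.
Proof.
move=> D Hsrc [Tb Ts Td Tmono] [Hsub Hnc] A HA.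
rewrite /controllable; apply/eqP; apply: inj_row_free => x Hx.
have HxB : forall k, (k < n)%N -> x *m (A ^+ k *m Bmat VC) = 0.
  move=> k Hk; move: Hx; rewrite mul_mxrow => /(congr1 (fun M => submxrow M (Ordinal Hk))).
  by rewrite mxrowK submxrow0.
have key : forall t j, (j + t < n)%N -> forall v, (T v <= t.+1)%N -> (x *m A ^+ j) 0 v = 0.
  elim => [|t IH] j Hjt v Hv.
    have Hvs : v \in VC.
      rewrite -Hsrc; apply/negPn/negP => Hns.
      have [u Hu] := cs_pred_exists D Hns.
      have := Tmono _ _ Hu; have := Tb u; case/andP => H1 _.
      move: Hv; rewrite /leq; lia.
    have Hj : (j < n)%N by lia.
    have := congr1 (fun M : 'rV[Rdefinitions.R]_#|VC| => M ord0 (enum_rank_in Hvs v)) (HxB j Hj).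
    by rewrite mulmxA mulB enum_rankK_in // => ->; rewrite mxE.
  case: (leqP (T v) t.+1) => Hvt; first by apply: IH => //; lia.
  have HTv : T v = t.+2 by lia.
  have Hns : v \notin chain_sources cs.
    by apply/negP => /Ts; rewrite HTv.
  have [u Huv] := cs_pred_exists D Hns.
  have Hlt := Tmono _ _ Huv.
  have Huv_ne : v != u by apply/eqP => E; subst; rewrite ltnn in Hlt.
  have HAvu : A v u != 0 by apply/(HA _ _ Huv_ne); apply: (subsetP Hsub).
  have Hy1 : (x *m A ^+ j.+1) 0 u = 0 by apply: IH; lia.
  move: Hy1; rewrite exprSr -mulmxE mulmxA mxE (bigD1 v) //= big1 ?addr0.
    by move/eqP; rewrite mulf_eq0 (negbTE HAvu) orbF => /eqP.
  move=> i Hiv.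
  case: (eqVneq i u) => [->|Hiu]; first by rewrite IH ?mul0r //; lia.
  case: (eqVneq (A i u) 0) => [->|HAiu]; first by rewrite mulr0.
  have HuiF : (u, i) \in F by apply/(HA _ _ Hiu).
  case: (boolP ((u, i) \in chainsE cs)) => Hc.
    by rewrite (cs_succ D Hc Huv) eqxx in Hiv.
  have := Hnc _ _ HuiF Hc; rewrite (cs_Tmax D T Huv) HTv /= => Hle.
  rewrite IH ?mul0r //; lia.
apply/rowP => v; rewrite mxE.
have Hsz : (0 < size cs)%N.
  case: D => _ _ Hcov; have := Hcov v; by case: (cs).
have := key n.-1 0%N _ v; rewrite expr0 mulmx1; apply.
  by have := ltn_ord v; lia.
have := Tb v; case/andP => _; rewrite /gamma; have := ltn_ord v; lia.
Qed.

Lemma need_in n (F : edgeset n) VC v : SSC F VC -> v \notin VC ->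
  [exists j, (j != v) && ((j, v) \in F)].
Proof.
move=> S Hv; case: (boolP [exists j, (j != v) && ((j, v) \in F)]) => // /existsPn Hno.
pose A : 'M[Rdefinitions.R]_n := \matrix_(i, j) ((i != j) && ((j, i) \in F))%:R.
have HA : inQ F A.
  move=> i j Hij; rewrite mxE Hij /=.
  by case: ((j, i) \in F); split => //; rewrite ?oner_neq0 ?eqxx.
have := S A HA; rewrite /controllable => /eqP Hf.
have Hrow : row v A = 0.
  apply/rowP => w; rewrite !mxE.
  case: (eqVneq v w) => [->|Hvw] //=.
  by have := Hno w; rewrite negb_and negbK => /orP[/eqP E|/negbTE ->]; [subst; rewrite eqxx in Hvw|].
have HrowB : row v (Bmat VC) = 0.
  apply/rowP => k; rewrite !mxE.
  case: (eqVneq v (enum_val k)) => [E|] //.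
  by move: Hv; rewrite E enum_valP.
have Hx : (delta_mx 0 v : 'rV[Rdefinitions.R]_n) *m \mxrow_(k < n) (A ^+ k *m Bmat VC) = 0.
  rewrite mul_mxrow -(mxrow0 _).
  apply/eq_mxrow => k.
  case: k => [[|k] Hk] /=.
    by rewrite expr0 mul1mx -rowE HrowB.
  by rewrite exprS -mulmxE !mulmxA -rowE Hrow !mul0mx.
have := Hx; move/eqP; rewrite (mulmx_free_eq0 _ Hf) => /eqP/matrixP/(_ 0 v).
by rewrite !mxE !eqxx /= => /eqP; rewrite oner_eq0.
Qed.

Theorem proposition3 (n : nat) (E : {set 'I_n * 'I_n}) (VC : {set 'I_n})
    (cs : seq (seq 'I_n)) (T : 'I_n -> nat) :
  zero_forcing_set E VC ->
  size cs = #|VC| ->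
  disjoint_chain_cover cs ->
  chain_sources cs = VC ->
  time_function cs T ->
  in_graph_class cs T E ->
  critical_subtractive E VC (E :\: chainsE cs) /\
  is_ncsub E VC (#|E| + #|VC| - n)%N.
Proof.
move=> _ _ D Hsrc HT [Hsub Hnc].
have Hsubtr : subtractive E VC (E :\: chainsE cs).
  split; first exact: subsetDl.
  move=> E' HE'; apply: (ssc_class D Hsrc HT); split.
    apply/subsetP => e He; rewrite in_setD (subsetP Hsub) // andbT.
    apply/negP => He'; have := subsetP HE' e He'; by rewrite in_setD He.
  move=> u v; rewrite in_setD => /andP[_ HuvE] Hnot; exact: Hnc.
have Hbound : forall Es, subtractive E VC Es -> (#|Es| <= #|E| + #|VC| - n)%N.
  move=> Es [HEs Hss]; have S := Hss Es (subxx Es).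
  pose P := [set e in E :\: Es | e.1 != e.2].
  have H1 : ~: VC \subset [set e.2 | e in P].
    apply/subsetP => v; rewrite inE => Hv.
    have /existsP [j /andP [Hjv HjF]] := need_in S Hv.
    by apply/imsetP; exists (j, v) => //; rewrite inE HjF /=.
  have H2 := subset_leq_card H1.
  have H3 := leq_imset_card (fun e : 'I_n * 'I_n => e.2) P.
  have H4 : (#|P| <= #|E :\: Es|)%N by apply: subset_leq_card; apply/subsetP => e; rewrite inE => /andP[].
  move: H2 H3 H4; rewrite cardsCs setCK card_ord cardsD (setIidPr HEs).
  have := subset_leq_card HEs; have : (#|VC| <= n)%N by have := subset_leq_card (subsetT VC); rewrite cardsT card_ord.
  move=> h1 h2 h3 h4 h5; have h6 := leq_trans h3 (leq_trans h4 h5); move: h1 h2 h6; clear; move: #|VC| #|Es| #|E| => a b c; lia.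
have Hcard : #|E :\: chainsE cs| = (#|E| + #|VC| - n)%N.
  apply/eqP; rewrite eqn_leq Hbound //=.
  have H1 : [set e.2 | e in chainsE cs] \subset ~: VC.
    apply/subsetP => v /imsetP [[a b] He ->] /=; rewrite in_setC -Hsrc.
    have HH := @cs_not_source _ _ D _ _ He. exact: HH.
  have H2 : #|[set e.2 | e in chainsE cs]| = #|chainsE cs|.
    apply: card_in_imset => [[a b] [a' b']] He He' /= Eb; subst b'.
    by rewrite (cs_pred D He He').
  have H3 := subset_leq_card H1.
  move: H3; rewrite H2 [#|~: VC|]cardsCs setCK card_ord cardsD (setIidPr Hsub).
  have := subset_leq_card Hsub; have : (#|VC| <= n)%N by have := subset_leq_card (subsetT VC); rewrite cardsT card_ord.
  clear; move: #|VC| #|chainsE cs| #|E| => a b c; lia.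
split; first (split => //; rewrite Hcard; split => //; by exists (E :\: chainsE cs)).
by split => //; exists (E :\: chainsE cs).
Qed.
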